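(* Let $a<b$, let $N\ge1$ and $T\ge1$. For a probability distribution function $F$ on $[a,b]$ and $y\in[a,b]$ let $\mathrm{CRPS}(F,y)=\int_a^b(F(u)-H(u-y))^2\,du$, where $H(x)=0$ for $x<0$ and $H(x)=1$ for $x\ge0$. Consider the online protocol: set $w_{i,1}=\frac1N$ for $1\le i\le N$; for $t=1,\dots,T$: experts $i=1,\dots,N$ announce probability distribution functions $F_{i,t}$ on $[a,b]$; the learner announces the weighted average $$F_t(u)=\sum_{i=1}^N w^*_{i,t}F_{i,t}(u),\qquad w^*_{i,t}=\frac{w_{i,t}}{\sum_{j=1}^N w_{j,t}};$$ an outcome $y_t\in[a,b]$ is revealed (arbitrarily, possibly adversarially); and the weights are updated by $w_{i,t+1}=w_{i,t}\,e^{-\frac{1}{2(b-a)}\mathrm{CRPS}(F_{i,t},y_t)}$. Then for every $1\le i\le N$, $$\sum_{t=1}^T\mathrm{CRPS}(F_t,y_t)\le\sum_{t=1}^T\mathrm{CRPS}(F_{i,t},y_t)+2(b-a)\ln N.$$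
   Context: A probability distribution function on $[a,b]$ is a non-decreasing function $F:[a,b]\to[0,1]$ with $F(a)=0$, $F(b)=1$, left-continuous and having a right limit at each point. *)

(* Defs.v *)
From HB Require Import structures.
From mathcomp Require Import all_boot all_order all_algebra.
From mathcomp Require Import all_classical all_reals all_analysis.
Set Implicit Arguments. Unset Strict Implicit. Unset Printing Implicit Defensive.
Import Order.TTheory GRing.Theory Num.Theory.
Import numFieldNormedType.Exports.
Local Open Scope classical_set_scope.
Local Open Scope ring_scope.

Section Defs.
Variable R : realType.

Definition is_pdf (a b : R) (F : R -> R) : Prop :=
  (forall u v, a <= u -> u <= v -> v <= b -> F u <= F v) /\
  (forall u, a <= u <= b -> 0 <= F u <= 1) /\
  F a = 0 /\ F b = 1 /\
  (forall x, a < x <= b -> F u @[u --> x^'-] --> F x) /\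
  (forall x, a <= x < b -> cvg (F u @[u --> x^'+])).

Definition Heav (x : R) : R := if x < 0 then 0 else 1.

Definition CRPS (a b : R) (F : R -> R) (y : R) : R :=
  Rintegral lebesgue_measure `[a, b] (fun u => (F u - Heav (u - y)) ^+ 2).

(* Weights, time 0-based: aa_weight .. i 0 = w_{i,1} = 1/N,
   aa_weight .. i t.+1 = w_{i,t+2} = w_{i,t+1} * exp(-CRPS(F_{i,t+1},y_{t+1})/(2(b-a))). *)
Fixpoint aa_weight (a b : R) (N : nat) (Fe : 'I_N -> nat -> R -> R)
    (y : nat -> R) (i : 'I_N) (t : nat) : R :=
  match t with
  | 0 => 1 / N%:R
  | t'.+1 => aa_weight a b Fe y i t' *
             expR (- (1 / (2 * (b - a))) * CRPS a b (Fe i t') (y t'))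
  end.

Definition aa_forecast (a b : R) (N : nat) (Fe : 'I_N -> nat -> R -> R)
    (y : nat -> R) (t : nat) : R -> R :=
  fun u => \sum_(i < N) (aa_weight a b Fe y i t /
                          \sum_(j < N) aa_weight a b Fe y j t) * Fe i t u.

End Defs.

(* Main.v *)
Require Import Defs.
From HB Require Import structures.
From mathcomp Require Import all_boot all_order all_algebra.
From mathcomp Require Import all_classical all_reals all_analysis.
From mathcomp Require Import ring lra measurable_realfun.
Import Order.TTheory GRing.Theory Num.Theory.
Import numFieldNormedType.Exports.
Local Open Scope classical_set_scope.
Local Open Scope ring_scope.

Lemma mono_helper {R : realType} (f df : R -> R) (a b : R) :
  (forall x : R, is_derive x (1:R) f (df x)) -> a <= b ->
  (forall x, a < x < b -> 0 <= df x) -> f a <= f b.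
Proof.
move=> hd ab hpos.
case: (ltgtP a b) ab => // [ab|->] _; last by [].
have [|c cab] := @MVT R f df a b ab (fun x _ => hd x).
  apply/continuous_subspaceT=> r.
  exact/differentiable_continuous/derivable1_diffP/ex_derive.
move=> /eqP; rewrite subr_eq => /eqP ->.
rewrite lerDr mulr_ge0 ?subr_ge0 ?(ltW ab)// hpos//.
Qed.

Lemma key1D {R : realType} (x e : R) :
  x ^+ 2 <= e -> (x + e) ^+ 2 <= e -> expR (- x - e / 2) <= 1 - x.
Proof.
move=> h0 h1.
pose g := fun s : R => expR (- (x * s) - e / 2 * (s * s)).
have dg : forall s : R, is_derive s (1:R) g (- (x + e * s) * g s).
  move=> s.
  rewrite /g.
  apply: is_derive_eq.
  by rewrite /GRing.scale /= !mulr1; field.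
have hs : forall s, 0 <= s <= 1 -> (x + e * s) ^+ 2 <= e.
  move=> t /andP[s0 s1].
  have -> : x + e * t = (1 - t) * x + t * (x + e) by ring.
  have step : ((1 - t) * x + t * (x + e)) ^+ 2 <= (1 - t) * x ^+ 2 + t * (x + e) ^+ 2.
    rewrite -subr_ge0.
    have -> : (1 - t) * x ^+ 2 + t * (x + e) ^+ 2 - ((1 - t) * x + t * (x + e)) ^+ 2
      = t * (1 - t) * e ^+ 2 by ring.
    by rewrite mulr_ge0 ?sqr_ge0 ?mulr_ge0 ?subr_ge0.
  apply: (le_trans step).
  rewrite [leRHS](_ : e = (1 - t) * e + t * e); last by ring.
  by apply: lerD; apply: ler_wpM2l => //; rewrite ?subr_ge0.
have g0 : g 0 = 1.
  by rewrite /g /= (_ : - (x * 0) - e / 2 * (0 * 0) = 0) ?expR0 //; ring.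
have kpos : forall r, 0 <= r <= 1 -> 0 <= (x + e * r) * g r - x.
  move=> r /andP[r0 r1].
  have := @mono_helper R (fun r => (x + e * r) * g r - x)
     (fun r => (e - (x + e * r) ^+ 2) * g r) 0 r _ r0.
  rewrite g0 mulr0 addr0 mulr1 subrr; apply.
    move=> t; apply: is_derive_eq.
    by rewrite /GRing.scale /= !mulr1; ring.
  move=> t /andP[t0 ts]; rewrite mulr_ge0 ?subr_ge0 ?hs ?expR_ge0 ?(ltW t0) //.
  by rewrite (le_trans (ltW ts)).
have := @mono_helper R (fun r => - (g r + x * r))
     (fun r => (x + e * r) * g r - x) 0 1 _ ler01.
rewrite g0 mulr0 addr0 mulr1 => H.
suff: -1 <= -(expR (- x - e / 2) + x) by lra.
move: H; rewrite /g !mulr1; apply.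
  move=> t; apply: is_derive_eq.
  by rewrite /GRing.scale /= !mulr1 /g; ring.
move=> t /andP[t0 t1]; apply: kpos.
by rewrite !ltW.
Qed.

Lemma keyK {R : realType} (K c d : R) : 0 < K ->
  c ^+ 2 <= K * d -> (c + d) ^+ 2 <= K * d ->
  expR (- (c / K) - (d / K) / 2) <= 1 - c / K.
Proof.
move=> K0 h1 h2; apply: key1D.
  rewrite expr_div_n ler_pdivrMr ?exprn_gt0 //.
  by have -> : d / K * K ^+ 2 = K * d by field; rewrite gt_eqF.
have -> : c / K + d / K = (c + d) / K by field; rewrite gt_eqF.
rewrite expr_div_n ler_pdivrMr ?exprn_gt0 //.
by have -> : d / K * K ^+ 2 = K * d by field; rewrite gt_eqF.
Qed.

Definition good {R : realType} (a b : R) (f : R -> R) :=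
  measurable_fun `[a, b] f /\ exists M, forall x, a <= x <= b -> `|f x| <= M.



Lemma bnd_of {R : realType} (A : set R) (f : R -> R) M :
  (forall x, A x -> `|f x| <= M) -> [bounded f x | x in A].
Proof.
move=> h; rewrite /bounded_near; near=> MM => x Ax /=; apply: le_trans (h x Ax) _.
near: MM; exact: nbhs_pinfty_ge (num_real M).
Unshelve. all: end_near. Qed.

Lemma mu_ab {R : realType} (a b : R) : a <= b ->
  lebesgue_measure (`[a, b] : set R) = (b - a)%:E.
Proof.
move=> ab; rewrite lebesgue_measure_itv /= lte_fin.
case: ifPn => [//|]; rewrite -leNgt => ba.
have -> : b = a by apply/eqP; rewrite eq_le ab ba.
by rewrite subrr.
Qed.

Lemma good_int {R : realType} (a b : R) f : a <= b -> good a b f ->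
  lebesgue_measure.-integrable `[a, b] (EFin \o f).
Proof.
move=> ab [mf [M hM]]; apply: measurable_bounded_integrable => //.
  by have := mu_ab _ _ ab => /= ->; rewrite ltry.
apply: (@bnd_of _ _ _ M) => x; rewrite /= in_itv /=; exact: hM.
Qed.

Lemma goodD {R : realType} {a b : R} f g : good a b f -> good a b g ->
  good a b (fun x => f x + g x).
Proof.
move=> [mf [M1 h1]] [mg [M2 h2]]; split; first exact: measurable_funD.
exists (M1 + M2) => x hx; apply: le_trans (ler_normD _ _) _.
exact: lerD (h1 x hx) (h2 x hx).
Qed.

Lemma goodM {R : realType} {a b : R} f g : good a b f -> good a b g ->
  good a b (fun x => f x * g x).
Proof.
move=> [mf [M1 h1]] [mg [M2 h2]]; split; first exact: measurable_funM.
exists (`|M1| * `|M2|) => x hx; rewrite normrM.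
apply: ler_pM => //; apply: le_trans (ler_norm _); [exact: h1|exact: h2].
Qed.

Lemma goodC {R : realType} (a b : R) (c : R) : good a b (fun _ => c).
Proof. split; first exact: measurable_cst. by exists `|c|. Qed.

Lemma goodB {R : realType} {a b : R} f g : good a b f -> good a b g ->
  good a b (fun x => f x - g x).
Proof.
move=> hf hg.
suff: good a b (fun x => f x + (-1) * g x).
  by congr (good a b _); apply: funext => x; rewrite mulN1r.
exact: goodD _ _ hf (goodM _ _ (goodC a b (-1)) hg).
Qed.

Notation II a b f := (Rintegral lebesgue_measure `[a, b] f).

Lemma ID {R : realType} (a b : R) f g : a <= b -> good a b f -> good a b g ->
  II a b (fun x => f x + g x) = II a b f + II a b g.
Proof. by move=> ab hf hg; rewrite RintegralD //; apply: good_int. Qed.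

Lemma IZ {R : realType} (a b : R) f k : a <= b -> good a b f ->
  II a b (fun x => k * f x) = k * II a b f.
Proof. by move=> ab hf; rewrite RintegralZl //; apply: good_int. Qed.

Lemma I0 {R : realType} (a b : R) : II a b (fun _ => 0 : R) = 0.
Proof. by rewrite Rintegral_cst // mul0r. Qed.

Lemma discr {R : realType} (A B C : R) : 0 <= A ->
  (forall t, 0 <= C - 2 * t * B + t ^+ 2 * A) -> B ^+ 2 <= A * C.
Proof.
move=> A0 h; case: (ltgtP A 0) A0 => // [Ap|A00] _; last move: h; last rewrite A00 => h.
  have := h (B / A).
  have -> : C - 2 * (B / A) * B + (B / A) ^+ 2 * A = (A * C - B ^+ 2) / A.
    by field; rewrite gt_eqF.
  by move=> H; have := mulr_ge0 H (ltW Ap); rewrite divfK ?gt_eqF // subr_ge0.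
case: (eqVneq B 0) => [->|Bn0]; first by rewrite expr0n mul0r.
have := h ((C + 1) / (2 * B)).
rewrite mulr0 addr0.
have -> : C - 2 * ((C + 1) / (2 * B)) * B = -1 by field.
by rewrite lerNr oppr0 ler10.
Qed.

Lemma goodX2 {R : realType} {a b : R} f : good a b f ->
  good a b (fun x => f x ^+ 2).
Proof. move=> hf; exact: (goodM _ _ hf hf). Qed.

Ltac gd := repeat first [ assumption |
  match goal with h : forall i, good _ _ (_ i) |- _ => apply: h end | apply: goodX2 | apply: goodB | apply: goodD
  | apply: goodM | apply: goodC ].

Lemma CS {R : realType} (a b : R) f g : a <= b -> good a b f -> good a b g ->
  II a b (fun x => f x * g x) ^+ 2 <=
  II a b (fun x => f x ^+ 2) * II a b (fun x => g x ^+ 2).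
Proof.
move=> ab hf hg; apply: discr.
  by apply: Rintegral_ge0 => x _; exact: sqr_ge0.
move=> t.
have E : (fun x => (g x - t * f x) ^+ 2) =
   (fun x => g x ^+ 2 + ((- (2 * t)) * (f x * g x) + t ^+ 2 * f x ^+ 2)).
  by apply: funext => x; ring.
have := @Rintegral_ge0 _ _ _ lebesgue_measure `[a, b] (fun x => (g x - t * f x) ^+ 2)
  (fun x _ => sqr_ge0 _).
rewrite E ID //; try by gd.
rewrite ID //; try by gd.
rewrite !IZ //; try by gd.
lra.
Qed.

Lemma Ibound {R : realType} (a b : R) f : a <= b -> good a b f ->
  (forall x, a <= x <= b -> `|f x| <= 1) -> II a b (fun x => f x ^+ 2) <= b - a.
Proof.
move=> ab hf h1.
have -> : b - a = II a b (fun _ => 1).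
  rewrite Rintegral_cst // mul1r.
  by have := mu_ab _ _ ab => /= ->.
apply: le_Rintegral => //; try (apply: good_int => //; gd).
move=> x; rewrite /= in_itv /= => hx.
rewrite -real_normK ?num_real //; apply: exprn_ile1 => //.
exact: h1.
Qed.

Lemma Isum {R : realType} (a b : R) (I : Type) (r : seq I) (h : I -> R -> R) :
  a <= b -> (forall i, good a b (h i)) ->
  good a b (fun u => \sum_(i <- r) h i u) /\
  II a b (fun u => \sum_(i <- r) h i u) = \sum_(i <- r) II a b (h i).
Proof.
move=> ab hg; elim: r => [|i r [IH1 IH2]].
  under eq_fun do rewrite big_nil.
  by rewrite big_nil; split; [exact: goodC | exact: I0].
under eq_fun do rewrite big_cons.
split; first by apply: goodD.
by rewrite ID // IH2 big_cons.
Qed.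

Lemma good_mono {R : realType} (a b : R) F : a <= b ->
  (forall u v, a <= u -> u <= v -> v <= b -> F u <= F v) ->
  (forall u, a <= u <= b -> 0 <= F u <= 1) -> good a b F.
Proof.
move=> ab mono h01; split; last first.
  exists 1 => x /h01 /andP[h0 h1]; by rewrite ger0_norm.
pose G u := F (Num.min (Num.max u a) b).
have mG : measurable_fun `[a, b] G.
  apply: nondecreasing_measurable => // u v uv; rewrite /G.
  apply: mono.
  - by rewrite le_min le_max lexx ab orbT.
  - by apply: le_min2 => //; apply: le_max2.
  - by rewrite ge_min lexx orbT.
apply: eq_measurable_fun mG => x; rewrite inE /= in_itv /= => /andP[ax xb].
by rewrite /G (max_idPl ax) (min_idPl xb).
Qed.

Lemma good_heav {R : realType} (a b y : R) : good a b (fun u => Heav (u - y)).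
Proof.
split; last first.
  by exists 1 => x _; rewrite /Heav; case: ifP; rewrite ?normr0 ?normr1.
apply: nondecreasing_measurable => // u v uv; rewrite /Heav.
case: ifP => hu; first by case: ifP.
case: ifP => // hv; exfalso.
move/negbT: hu; rewrite -leNgt => hu.
have uv2 : u - y <= v - y by rewrite lerD2r.
by have := lt_le_trans (le_lt_trans uv2 hv) hu; rewrite ltxx.
Qed.

Lemma mix {R : realType} (a b y : R) (N : nat) (p : 'I_N -> R)
    (Fs : 'I_N -> R -> R) :
  a < b -> (forall i, 0 <= p i) -> \sum_(i < N) p i = 1 ->
  (forall i, good a b (Fs i)) ->
  (forall i u, a <= u <= b -> 0 <= Fs i u <= 1) ->
  \sum_(i < N) p i * expR (- (1 / (2 * (b - a))) * CRPS a b (Fs i) y)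
  <= expR (- (1 / (2 * (b - a))) * CRPS a b (fun u => \sum_(i < N) p i * Fs i u) y).
Proof.
move=> altb hp hp1 hg h01.
have ab := ltW altb.
set K := b - a.
have K0 : 0 < K by rewrite subr_gt0.
set F := fun u => \sum_(i < N) p i * Fs i u.
set H := fun u => Heav (u - y).
have gH : good a b H by apply: good_heav.
have gF : good a b F.
  have [] := @Isum R a b 'I_N (index_enum _) (fun i u => p i * Fs i u) ab.
    by move=> i; gd.
  by [].
have F01 : forall u, a <= u <= b -> 0 <= F u <= 1.
  move=> u hu; apply/andP; split.
    by apply: sumr_ge0 => i _; apply: mulr_ge0 => //; case/andP: (h01 i u hu).
  rewrite -hp1; apply: ler_sum => i _.
  by rewrite ler_piMr //; case/andP: (h01 i u hu).
have H01 : forall u, H u = 0 \/ H u = 1.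
  by move=> u; rewrite /H /Heav; case: ifP; [left|right].
set X := fun u => F u - H u.
have gX : good a b X by exact: (goodB _ _ gF gH).
have X1 : forall u, a <= u <= b -> `|X u| <= 1.
  move=> u hu; have /andP[f0 f1] := F01 u hu; rewrite /X.
  by case: (H01 u) => ->; rewrite ler_norml; apply/andP; split; lra.
set c := fun i => II a b (fun u => X u * (Fs i u - F u)).
set d := fun i => II a b (fun u => (Fs i u - F u) ^+ 2).
have L0 : CRPS a b F y = II a b (fun u => X u ^+ 2) by [].
have Li : forall i, CRPS a b (Fs i) y = CRPS a b F y + 2 * c i + d i.
  move=> i; rewrite L0 /CRPS.
  have -> : (fun u => (Fs i u - Heav (u - y)) ^+ 2) =
    (fun u => X u ^+ 2 + (2 * (X u * (Fs i u - F u)) + (Fs i u - F u) ^+ 2)).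
    by apply: funext => u; rewrite /X /H; ring.
  rewrite ID //.
  rewrite ID //.
  all: try by gd.
  by rewrite IZ ?addrA //; gd.
have gD : forall i, good a b (fun u => Fs i u - F u) by move=> i; gd.
have csum : \sum_(i < N) p i * c i = 0.
  have E : forall i, p i * c i = II a b (fun u => p i * (X u * (Fs i u - F u))).
    by move=> i; rewrite IZ //; gd.
  rewrite (eq_bigr _ (fun i _ => E i)).
  have [_ <-] := @Isum R a b 'I_N (index_enum _)
     (fun i u => p i * (X u * (Fs i u - F u))) ab (fun i => ltac:(gd)).
  rewrite (_ : (fun u => _) = fun _ => 0) ?I0 //.
  apply: funext => u.
  rewrite (eq_bigr (fun i => X u * (p i * Fs i u) - X u * F u * p i)); last first.
    by move=> i _; ring.
  by rewrite sumrB -!mulr_sumr hp1 mulr1 /F subrr.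
have dge0 : forall i, 0 <= d i.
  by move=> i; apply: Rintegral_ge0 => x _; exact: sqr_ge0.
have cs1 : forall i, c i ^+ 2 <= K * d i.
  move=> i; apply: le_trans (@CS _ a b _ _ ab gX (gD i)) _.
  apply: ler_wpM2r; first exact: dge0.
  exact: Ibound.
have cs2 : forall i, (c i + d i) ^+ 2 <= K * d i.
  move=> i.
  have -> : c i + d i = II a b (fun u => (X u + (Fs i u - F u)) * (Fs i u - F u)).
    rewrite /c /d -ID //; try by gd.
    by congr (II a b _); apply: funext => u; ring.
  apply: le_trans (@CS _ a b _ _ ab _ (gD i)) _; first by gd.
  apply: ler_wpM2r; first exact: dge0.
  apply: Ibound => //; first by gd.
  move=> u hu; rewrite (_ : X u + _ = Fs i u - H u); last by rewrite /X; ring.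
  have /andP[f0 f1] := h01 i u hu.
  by case: (H01 u) => ->; rewrite ler_norml; apply/andP; split; lra.
set E0 := expR (- (1 / (2 * K)) * CRPS a b F y).
have step : forall i, expR (- (1 / (2 * K)) * CRPS a b (Fs i) y) <= E0 * (1 - c i / K).
  move=> i; rewrite Li.
  have -> : - (1 / (2 * K)) * (CRPS a b F y + 2 * c i + d i) =
     - (1 / (2 * K)) * CRPS a b F y + (- (c i / K) - (d i / K) / 2).
    by field; rewrite gt_eqF.
  rewrite expRD ler_wpM2l ?expR_ge0 //.
  exact: keyK.
apply: le_trans (ler_sum _ (fun i _ => ler_wpM2l (hp i) (step i))) _.
rewrite (eq_bigr (fun i => E0 * p i - E0 / K * (p i * c i))); last first.
  by move=> i _; field; rewrite gt_eqF.
by rewrite sumrB -!mulr_sumr hp1 csum mulr0 subr0 mulr1.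
Qed.

Local Close Scope classical_set_scope.

Theorem mainTheorem4 (R : realType) (a b : R) (N T : nat)
    (Fe : 'I_N -> nat -> R -> R) (y : nat -> R) :
  a < b -> (1 <= N)%N -> (1 <= T)%N ->
  (forall (i : 'I_N) (t : nat), (t < T)%N -> is_pdf a b (Fe i t)) ->
  (forall t : nat, (t < T)%N -> a <= y t <= b) ->
  forall i : 'I_N,
    \sum_(t < T) CRPS a b (aa_forecast a b Fe y t) (y t)
    <= \sum_(t < T) CRPS a b (Fe i t) (y t) + 2 * (b - a) * ln (N%:R : R).
Proof.
move=> altb N1 T1 hpdf hy i.
have ab := ltW altb.
set K := b - a.
have K0 : 0 < K by rewrite subr_gt0.
set eta := 1 / (2 * K).
set w := fun j t => aa_weight a b Fe y j t.
set W := fun t => \sum_(j < N) w j t.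
have N0 : 0 < (N%:R : R) by rewrite ltr0n.
have wpos : forall j t, 0 < w j t.
  move=> j; elim => [|t IH]; first by rewrite /w /= divr_gt0.
  by rewrite /w /= mulr_gt0 // expR_gt0.
have Wpos : forall t, 0 < W t.
  move=> t; rewrite /W.
  have j0 : 'I_N by exists 0%N.
  rewrite (bigD1 j0) //= ltr_pwDl ?wpos // sumr_ge0 // => j _.
  exact: ltW.
have wform : forall j t, w j t = 1 / N%:R * expR (- eta * \sum_(s < t) CRPS a b (Fe j s) (y s)).
  move=> j; elim => [|t IH]; first by rewrite big_ord0 mulr0 expR0 mulr1.
  rewrite /w /= -/(w j t) IH big_ord_recr /= [in RHS]mulrDr expRD mulrA.
  done.
have Wstep : forall t, (t < T)%N ->
    W t.+1 <= expR (- eta * CRPS a b (aa_forecast a b Fe y t) (y t)) * W t.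
  move=> t tT.
  have -> : W t.+1 = W t * \sum_(j < N) (w j t / W t) *
      expR (- eta * CRPS a b (Fe j t) (y t)).
    rewrite mulr_sumr /W /=; apply: eq_bigr => j _.
    rewrite mulrA (mulrC (\sum_(j0 < N) w j0 t)) divfK ?gt_eqF //.
    exact: Wpos.
  rewrite mulrC; apply: ler_wpM2r; first exact: ltW.
  have psum : \sum_(j < N) w j t / W t = 1.
    by rewrite -mulr_suml divff // gt_eqF // Wpos.
  apply: mix => //.
  - by move=> j; rewrite divr_ge0 // ltW.
  - move=> j; have [m [b01 [_ _]]] := hpdf j t tT.
    by apply: good_mono.
  - by move=> j u hu; have [_ [b01 _]] := hpdf j t tT; apply: b01.
have W0 : W 0%N = 1.
  rewrite /W /w /= sumr_const card_ord -(mulr_natr (1 / N%:R : R) N) div1r mulVf //.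
  by rewrite gt_eqF.
have Wbound : forall t, (t <= T)%N ->
    W t <= expR (- eta * \sum_(s < t) CRPS a b (aa_forecast a b Fe y s) (y s)).
  elim => [|t IH] tT; first by rewrite W0 big_ord0 mulr0 expR0.
  apply: le_trans (Wstep t tT) _.
  rewrite big_ord_recr /= mulrDr expRD mulrC.
  apply: ler_wpM2r; first exact: expR_ge0.
  by apply: IH; apply: ltnW.
have wW : w i T <= W T.
  rewrite /W (bigD1 i) //= lerDl sumr_ge0 // => j _.
  exact: ltW.
have key := le_trans wW (Wbound T (leqnn T)).
rewrite (wform i T) in key.
set S := \sum_(s < T) CRPS a b (Fe i s) (y s) in key *.
set P := \sum_(s < T) CRPS a b (aa_forecast a b Fe y s) (y s) in key *.
have key2 : expR (- eta * S) <= expR (ln N%:R - eta * P).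
  rewrite expRD lnK ?posrE //.
  move: key; rewrite -(ler_pM2l N0) mulrA div1r divff ?gt_eqF // mul1r mulNr.
  by rewrite !mulNr.
rewrite ler_expR in key2.
rewrite -subr_ge0.
have : 0 <= (ln N%:R - eta * P + eta * S) * (2 * K).
  by apply: mulr_ge0; [lra | rewrite mulr_ge0 // ltW].
have -> : (ln N%:R - eta * P + eta * S) * (2 * K) = S + 2 * K * ln N%:R - P.
  by rewrite /eta; field; rewrite gt_eqF.
done.
Qed.
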